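(* Let $A$ be a Prüfer ring. Then every regular locally principal ideal of $A$ is invertible if and only if $A$ has the finite character.
   Context: $A$ is a commutative ring with identity and $T(A)$ its total quotient ring. An element of $A$ is regular if it is not a zero divisor; an ideal is regular if it contains a regular element. An ideal $\mathfrak a$ of $A$ is invertible if there is an $A$-submodule $U$ of $T(A)$ with $\mathfrak aU=A$. $A$ is a Prüfer ring if every finitely generated regular ideal of $A$ is invertible. An ideal is locally principal if $\mathfrak aA_{\mathfrak m}$ is principal for every maximal ideal $\mathfrak m$. $A$ has the finite character if every regular element of $A$ is contained in only finitely many maximal ideals of $A$. *)

(* Defs.v *)
(* Ideals are
   predicates R -> Prop; elements of the total quotient ring T(A) and of the
   localization A_m are represented as fractions (numerator, denominator). *)
From mathcomp Require Import all_boot all_order all_algebra.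
Set Implicit Arguments. Unset Strict Implicit. Unset Printing Implicit Defensive.
Import GRing.Theory.
Local Open Scope ring_scope.

Section CommRingDefs.
Variable R : comPzRingType.

Definition regular (x : R) : Prop := forall y : R, x * y = 0 -> y = 0.

Definition is_ideal (I : R -> Prop) : Prop :=
  [/\ I 0, (forall x y, I x -> I y -> I (x + y)) &
      (forall r x, I x -> I (r * x))].

Definition regular_ideal (I : R -> Prop) : Prop :=
  exists x, I x /\ regular x.

Definition maximal_ideal (m : R -> Prop) : Prop :=
  [/\ is_ideal m, ~ m 1 &
      (forall J : R -> Prop, is_ideal J -> (forall x, m x -> J x) ->
         (forall x, J x <-> m x) \/ J 1)].

Definition fin_gen (I : R -> Prop) : Prop :=
  exists s : seq R, forall x, I x <->
    exists c : seq R, x = \sum_(i < size s) c`_i * s`_i.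

Definition tfrac (z : R * R) : Prop := regular z.2.
Definition tfrac_eq (z w : R * R) : Prop := z.1 * w.2 = w.1 * z.2.
Definition tfrac_add (z w : R * R) : R * R := (z.1 * w.2 + w.1 * z.2, z.2 * w.2).
Definition tsubmodule (U : R * R -> Prop) : Prop :=
  [/\ (forall z, U z -> tfrac z),
      (forall z w, tfrac w -> tfrac_eq z w -> U z -> U w),
      U (0, 1),
      (forall z w, U z -> U w -> U (tfrac_add z w)) &
      (forall r z, U z -> U (r * z.1, z.2))].
(* the product a U: fractions equal to finite sums of x_i u_i, x_i in a, u_i in U *)
Definition tprod (I : R -> Prop) (U : R * R -> Prop) (z : R * R) : Prop :=
  tfrac z /\ exists l : seq (R * (R * R)),
    (forall p, p \in l -> I p.1 /\ U p.2) /\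
    tfrac_eq z (foldr (fun p acc => tfrac_add (p.1 * p.2.1, p.2.2) acc) (0, 1) l).
(* a is invertible: a U = A for some A-submodule U of T(A), where A is
   identified with the fractions c/1 *)
Definition invertible (I : R -> Prop) : Prop :=
  exists U, tsubmodule U /\
    forall z, tfrac z -> (tprod I U z <-> exists c : R, tfrac_eq z (c, 1)).

Definition prufer : Prop :=
  forall I, is_ideal I -> fin_gen I -> regular_ideal I -> invertible I.

Definition loc_eq (m : R -> Prop) (z w : R * R) : Prop :=
  exists u, ~ m u /\ u * (z.1 * w.2 - w.1 * z.2) = 0.
(* membership of x/s in the extended ideal a A_m *)
Definition in_ext (m I : R -> Prop) (z : R * R) : Prop :=
  exists y t, I y /\ ~ m t /\ loc_eq m z (y, t).
Definition loc_principal (m I : R -> Prop) : Prop :=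
  exists p q, ~ m q /\ forall x s, ~ m s ->
    (in_ext m I (x, s) <-> exists r v, ~ m v /\ loc_eq m (x, s) (p * r, q * v)).

Definition locally_principal (I : R -> Prop) : Prop :=
  forall m, maximal_ideal m -> loc_principal m I.

Definition finite_character : Prop :=
  forall x, regular x -> exists (n : nat) (f : nat -> (R -> Prop)),
    forall m, maximal_ideal m -> m x ->
      exists i, (i < n)%N /\ forall y, m y <-> f i y.

End CommRingDefs.

(* Main.v *)
Require Import Defs.
From mathcomp Require Import all_boot all_order all_algebra ring.
From mathcomp Require Import boolp classical_sets.
From Stdlib Require Import Classical.
Set Implicit Arguments. Unset Strict Implicit.
Import GRing.Theory.
Local Open Scope ring_scope.

Lemma reg_cancel (R : comPzRingType) (d a b : R) :
  regular d -> a * d = b * d -> a = b.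
Proof.
move=> hd e; apply/eqP; rewrite -subr_eq0; apply/eqP; apply: hd.
by rewrite mulrBr ![d * _]mulrC e subrr.
Qed.

Lemma reg_mul (R : comPzRingType) (a b : R) :
  regular a -> regular b -> regular (a * b).
Proof. by move=> ha hb y; rewrite -mulrA => /ha /hb. Qed.

Lemma reg1 (R : comPzRingType) : regular (1 : R).
Proof. by move=> y; rewrite mul1r. Qed.

Lemma max_unit (R : comPzRingType) (m : R -> Prop) (e : R) :
  maximal_ideal m -> ~ m e -> exists c n, m n /\ n + c * e = 1.
Proof.
case=> [[m0 mD mM] m1 mmax] me.
pose J y := exists n c, m n /\ y = n + c * e.
have JI : is_ideal J.
  split; first by exists 0, 0; split => //; rewrite mul0r addr0.
  - move=> y z [n1 [c1 [h1 ->]]] [n2 [c2 [h2 ->]]].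
    exists (n1 + n2), (c1 + c2); split; [exact: mD | ring].
  - move=> r y [n1 [c1 [h1 ->]]]; exists (r * n1), (r * c1); split; [exact: mM|ring].
case: (mmax J JI).
- by move=> y my; exists y, 0; split => //; rewrite mul0r addr0.
- move=> h; exfalso; apply: me; apply/h; exists 0, 1; split => //; ring.
- move=> [n [c [h1 h2]]]; exists c, n; split => //.
Qed.

Lemma max_prime (R : comPzRingType) (m : R -> Prop) (a b : R) :
  maximal_ideal m -> ~ m a -> ~ m b -> ~ m (a * b).
Proof.
move=> hm ha hb hab; have hm' := hm; case: hm' => [[m0 mD mM] m1 _].
have [c1 [n1 [h1 e1]]] := max_unit hm ha.
have [c2 [n2 [h2 e2]]] := max_unit hm hb.
apply: m1.
have -> : (1 : R) = (n1 + c1 * a) * (n2 + c2 * b) by rewrite e1 e2 mulr1.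
have -> : (n1 + c1 * a) * (n2 + c2 * b) = n1 * (n2 + c2 * b) + (c1 * a * n2 + c1 * c2 * (a * b)) by ring.
apply: (mD); first by rewrite mulrC; exact: (mM).
apply: (mD); [exact: (mM) | exact: (mM)].
Qed.

Lemma max_not1 (R : comPzRingType) (m : R -> Prop) :
  maximal_ideal m -> ~ m 1.
Proof. by case. Qed.

Definition span (R : comPzRingType) (s : seq R) (y : R) : Prop :=
  exists c : seq R, y = \sum_(i < size s) c`_i * s`_i.

Lemma span_nil (R : comPzRingType) (y : R) : span [::] y <-> y = 0.
Proof.
split; first by move=> [c ->]; rewrite big_ord0.
by move=> ->; exists [::]; rewrite big_ord0.
Qed.

Lemma span_cons (R : comPzRingType) (a : R) s y :
  span (a :: s) y <-> exists c0 y', span s y' /\ y = c0 * a + y'.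
Proof.
split.
- move=> [c ->]; exists c`_0, (\sum_(i < size s) (behead c)`_i * s`_i).
  split; first by exists (behead c).
  rewrite /= big_ord_recl /=; congr (_ + _); apply: eq_bigr => i _.
  by rewrite nth_behead.
- move=> [c0 [y' [[c ->] ->]]]; exists (c0 :: c).
  by rewrite /= big_ord_recl.
Qed.

Lemma span_ideal (R : comPzRingType) (s : seq R) : is_ideal (span s).
Proof.
elim: s => [|a s [h0 hD hM]].
  split; first by apply/span_nil.
  - by move=> x y /span_nil -> /span_nil ->; apply/span_nil; rewrite addr0.
  - by move=> r x /span_nil ->; apply/span_nil; rewrite mulr0.
split.
- by apply/span_cons; exists 0, 0; split => //; rewrite mul0r addr0.
- move=> x y /span_cons [c0 [y0 [h1 ->]]] /span_cons [c1 [y1 [h2 ->]]].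
  apply/span_cons; exists (c0 + c1), (y0 + y1); split; [exact: hD | ring].
- move=> r x /span_cons [c0 [y0 [h1 ->]]].
  apply/span_cons; exists (r * c0), (r * y0); split; [exact: hM | ring].
Qed.

Lemma span_mem (R : comPzRingType) (s : seq R) a : a \in s -> span s a.
Proof.
elim: s => [//|b s IH]; rewrite in_cons => /orP [/eqP ->|h].
  apply/span_cons; exists 1, 0; split; last by rewrite mul1r addr0.
  by case: (span_ideal s).
by apply/span_cons; exists 0, a; split; [exact: IH | rewrite mul0r add0r].
Qed.

Lemma span_sub (R : comPzRingType) (s : seq R) (P : R -> Prop) :
  is_ideal P -> (forall a, a \in s -> P a) -> forall y, span s y -> P y.
Proof.
move=> [p0 pD pM]; elim: s => [|b s IH] hs y.
  by move/span_nil ->.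
move/span_cons => [c0 [y' [h ->]]]; apply: pD.
  by apply: pM; apply: hs; rewrite mem_head.
by apply: IH => // a ha; apply: hs; rewrite in_cons ha orbT.
Qed.

Lemma span_fg (R : comPzRingType) (s : seq R) : fin_gen (span s).
Proof. by exists s. Qed.

Definition LP (R : comPzRingType) (m I : R -> Prop) :=
  exists y, I y /\ forall a, I a -> exists v r, ~ m v /\ v * a = y * r.

Lemma lp_of_loc (R : comPzRingType) (m I : R -> Prop) :
  maximal_ideal m -> loc_principal m I -> LP m I.
Proof.
move=> hm [p [q [hq H]]].
have m1 := max_not1 hm.
have : in_ext m I (p, q).
  apply/(H p q hq); exists 1, 1; split => //; exists 1; split => //=; ring.
move=> [y [t [Iy [ht [u1 [hu1 e1]]]]]]; exists y; split => // a Ia.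
have : in_ext m I (a, 1) by exists a, 1; split => //; split => //; exists 1; split => //=; ring.
move/(H a 1 m1) => [r [v [hv [u2 [hu2 e2]]]]].
exists (u1 * u2 * t * q * v), (u1 * u2 * q * r); split.
  apply: max_prime => //; apply: max_prime => //; apply: max_prime => //.
  exact: max_prime.
simpl in e1, e2.
apply/eqP; rewrite -subr_eq0; apply/eqP.
have -> : u1 * u2 * t * q * v * a - y * (u1 * u2 * q * r) =
  u1 * t * (u2 * (a * (q * v) - p * r * 1)) + u2 * r * (u1 * (p * t - y * q)) by ring.
by rewrite e1 e2 !mulr0 addr0.
Qed.

Lemma loc_of_lp (R : comPzRingType) (m I : R -> Prop) :
  maximal_ideal m -> is_ideal I -> LP m I -> loc_principal m I.
Proof.
move=> hm [i0 iD iM] [y [Iy H]]; exists y, 1; split; first exact: max_not1.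
move=> x s hs; split.
- move=> [y' [t [Iy' [ht [u [hu e]]]]]]; simpl in e.
  have [v [r [hv e']]] := H y' Iy'.
  exists r, (t * v); split; first exact: max_prime.
  exists u; split => //=.
  have -> : x * (1 * (t * v)) - y * r * s = v * (x * t - y' * s) by rewrite mulrBr -e'; ring.
  by rewrite mulrCA e mulr0.
- move=> [r [v [hv [u [hu e]]]]]; simpl in e.
  exists (y * r), v; split; first by rewrite mulrC; exact: iM.
  split => //; exists u; split => //=; by rewrite -e mul1r.
Qed.

Lemma inv_ext (R : comPzRingType) (I K : R -> Prop) :
  (forall a, I a <-> K a) -> invertible K -> invertible I.
Proof.
move=> hIK [U [hU H]]; exists U; split => // z hz; rewrite -(H z hz).
split; move=> [h1 [l [hl e]]]; split => //; exists l; split => // p pl;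
  have [a b] := hl p pl; split => //; exact/hIK.
Qed.

Definition tfold (R : comPzRingType) (l : seq (R * (R * R))) :=
  foldr (fun p acc => tfrac_add (p.1 * p.2.1, p.2.2) acc) (0, 1) l.

Lemma tfold_form (R : comPzRingType) (I : R -> Prop) (l : seq (R * (R * R))) :
  (forall q, q \in l -> regular q.2.2 /\ I q.1 /\
     forall b, I b -> exists c, b * q.2.1 = c * q.2.2) ->
  regular (tfold l).2 /\ exists l' : seq (R * R),
    (forall p, p \in l' -> I p.1 /\ forall b, I b -> exists c, b * p.2 = c * (tfold l).2)
    /\ \sum_(p <- l') p.1 * p.2 = (tfold l).1.
Proof.
elim: l => [|q l IH] hl.
  split; first exact: reg1.
  by exists [::]; split => //; rewrite big_nil.
have [hq [Iq hqb]] := hl q (mem_head _ _).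
have [hr [l' [hl' e]]] : regular (tfold l).2 /\ exists l' : seq (R * R),
    (forall p, p \in l' -> I p.1 /\ forall b, I b -> exists c, b * p.2 = c * (tfold l).2)
    /\ \sum_(p <- l') p.1 * p.2 = (tfold l).1.
  by apply: IH => q' h; apply: hl; rewrite in_cons h orbT.
split; first by rewrite /= /tfrac_add /=; exact: reg_mul.
exists ((q.1, q.2.1 * (tfold l).2) :: map (fun p => (p.1, p.2 * q.2.2)) l').
split.
- move=> p; rewrite in_cons => /orP [/eqP -> | /mapP [p' p'l ->]] /=.
    split => // b Ib; have [c ec] := hqb b Ib; exists c.
    by rewrite /tfrac_add /= mulrA ec mulrA.
  have [Ip hp] := hl' p' p'l; split => // b Ib; have [c ec] := hp b Ib.
  by exists c; rewrite /tfrac_add /= mulrA ec; ring.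
- rewrite big_cons big_map /= /tfrac_add /= -e mulr_suml; congr (_ + _).
    by rewrite mulrA.
  by apply: eq_bigr => p _; rewrite mulrA.
Qed.

Lemma inv_form (R : comPzRingType) (I : R -> Prop) :
  invertible I -> exists d, regular d /\ exists l : seq (R * R),
    (forall p, p \in l -> I p.1 /\ forall b, I b -> exists c, b * p.2 = c * d)
    /\ \sum_(p <- l) p.1 * p.2 = d.
Proof.
move=> [U [[hU1 hU2 hU3 hU4 hU5] H]].
have h11 : tfrac ((1 : R), (1 : R)) by exact: reg1.
have [_ [l [hl e]]] : tprod I U (1, 1).
  by apply/(H _ h11); exists 1.
have hl2 : forall q, q \in l -> regular q.2.2 /\ I q.1 /\
     forall b, I b -> exists c, b * q.2.1 = c * q.2.2.
  move=> q ql; have [Iq Uq] := hl q ql; split; first exact: hU1.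
  split => // b Ib.
  have hb : tfrac (b * q.2.1, q.2.2) by exact: (hU1 _ Uq).
  have [c ec] : exists c : R, tfrac_eq (b * q.2.1, q.2.2) (c, 1).
    apply/(H _ hb); split => //; exists [:: (b, q.2)]; split.
      by move=> p; rewrite inE => /eqP -> /=.
    by rewrite /tfrac_eq /tfrac_add /=; ring.
  by exists c; move: ec; rewrite /tfrac_eq /= mulr1.
have [hr [l' [hl' e']]] := tfold_form hl2.
exists (tfold l).2; split => //; exists l'; split => //.
rewrite e'; move: e; rewrite /tfrac_eq /= mul1r mulr1 => ->; done.
Qed.

Lemma exists_max (R : comPzRingType) (C : R -> Prop) :
  is_ideal C -> ~ C 1 -> exists m, maximal_ideal m /\ forall y, C y -> m y.
Proof.
move=> hC hC1.
pose P : set (set R) := fun I =>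
  (is_ideal I /\ (forall y, C y -> I y) /\ ~ I 1) \/ I = set0.
have Pne : forall X y, P X -> X y -> is_ideal X /\ (forall y, C y -> X y) /\ ~ X 1.
  by move=> X y [//|->].
have [A [PA Amax]] : exists A : set R, P A /\ (forall B : set R, (A `<` B)%classic -> ~ P B).
  apply: Zorn_bigcup => F FP Ftot.
  case: (classic (exists X y, F X /\ X y)) => [[X0 [y0 [FX0 X0y0]]]|hno]; last first.
    right; apply/seteqP; split => y //= [X FX Xy]; apply: hno; by exists X, y.
  have [[x0 _ _] [CX0 _]] := Pne _ _ (FP _ FX0) X0y0.
  left; split; [split|split].
  - by exists X0.
  - move=> y z [X1 FX1 X1y] [X2 FX2 X2z].
    case: (Ftot _ _ FX1 FX2) => h.
      have [[_ hD _] _] := Pne _ _ (FP _ FX2) X2z.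
      by exists X2 => //; apply: hD => //; apply: h.
    have [[_ hD _] _] := Pne _ _ (FP _ FX1) X1y.
    by exists X1 => //; apply: hD => //; apply: h.
  - move=> r y [X1 FX1 X1y]; have [[_ _ hM] _] := Pne _ _ (FP _ FX1) X1y.
    by exists X1 => //; apply: hM.
  - by move=> y Cy; exists X0 => //; apply: CX0.
  - move=> [X1 FX1 X11]; have [_ [_ h]] := Pne _ _ (FP _ FX1) X11; exact: h.
case: PA => [[AI [CA A1]] | A0]; last first.
  exfalso; apply: (Amax C); last by left.
  rewrite A0; split => // h; case: hC => [c0 _ _]; exact: (h 0 c0).
exists A; split => //; split => // J JI AJ.
case: (classic (J 1)) => [|nJ1]; [by right|left].
have nprop : ~ (A `<` J)%classic.
  by move=> hp; apply: (Amax J hp); left; split => //; split => // y /CA /AJ.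
move=> y; split; last exact: AJ.
move=> Jy; apply: NNPP => nAy; apply: nprop; split; first exact: AJ.
by move=> h; apply: nAy; apply: h.
Qed.

Lemma dir1 (R : comPzRingType) : prufer R -> finite_character R ->
  forall I : R -> Prop, is_ideal I -> regular_ideal I ->
      locally_principal I -> invertible I.
Proof.
move=> hP hfc I hI [x [Ix xr]] hlp.
have [n [f hf]] := hfc x xr.
have [ys [hys Hys]] : exists ys : seq R, (forall y, y \in ys -> I y) /\
   forall i, (i < n)%N -> forall m, maximal_ideal m -> m x ->
   (forall z, m z <-> f i z) ->
   exists y, y \in ys /\ forall a, I a -> exists v r, ~ m v /\ v * a = y * r.
  elim: n {hf} => [|n [ys [h1 h2]]]; first by exists [::].
  case: (classic (exists m0, maximal_ideal m0 /\ m0 x /\ forall z, m0 z <-> f n z))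
    => [[m0 [hm0 [m0x e0]]] | hno].
  - have [y [Iy hy]] := lp_of_loc hm0 (hlp m0 hm0).
    exists (y :: ys); split.
      move=> z; rewrite in_cons => /orP [/eqP -> //| ]; exact: h1.
    move=> i; rewrite ltnS leq_eqVlt => /orP [/eqP -> | hi] m hm mx em.
      exists y; split; first exact: mem_head.
      move=> a Ia; have [v [r [hv e]]] := hy a Ia; exists v, r; split => //.
      by move=> mv; apply: hv; apply/e0/em.
    have [y' [y'in hy']] := h2 i hi m hm mx em; exists y'; split => //.
    by rewrite in_cons y'in orbT.
  - exists ys; split => // i; rewrite ltnS leq_eqVlt => /orP [/eqP -> | hi] m hm mx em.
      by exfalso; apply: hno; exists m.
    exact: (h2 i hi m hm mx em).
pose K := span (x :: ys).
have KI := span_ideal (x :: ys).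
have Kx : K x by apply: span_mem; exact: mem_head.
have KsubI : forall a, K a -> I a.
  apply: span_sub => // a; rewrite in_cons => /orP [/eqP -> //|]; exact: hys.
have IsubK : forall a, I a -> K a.
  move=> a Ia; case: (KI) => [k0 kD kM].
  pose C c := K (c * a).
  have CI : is_ideal C.
    split; first by rewrite /C mul0r.
    - by move=> c1 c2 h1 h2; rewrite /C mulrDl; exact: kD.
    - by move=> r c h; rewrite /C -mulrA; exact: kM.
  case: (classic (C 1)) => [|nC1]; first by rewrite /C mul1r.
  have [m [hm Cm]] := exists_max CI nC1.
  have mx : m x by apply: Cm; rewrite /C mulrC; exact: kM.
  have [i [hi em]] := hf m hm mx.
  have [y [yin hy]] := Hys i hi m hm mx em.
  have [v [r [hv e]]] := hy a Ia.
  exfalso; apply: hv; apply: Cm; rewrite /C e mulrC; apply: kM.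
  by apply: span_mem; rewrite in_cons yin orbT.
apply: (@inv_ext _ I K); first by move=> a; split; [exact: IsubK | exact: KsubI].
apply: hP => //; first exact: span_fg.
by exists x.
Qed.

Definition Jc (R : comPzRingType) (x : R) (A : R -> Prop) (a : R) : Prop :=
  forall b, A b -> exists c, a * b = x * c.

Fixpoint Jle (R : comPzRingType) (x : R) (I : nat -> R -> Prop) (N : nat) (a : R) : Prop :=
  match N with
  | 0 => a = 0
  | N'.+1 => exists a1 a2, Jle x I N' a1 /\ Jc x (I N') a2 /\ a = a1 + a2
  end.

Definition Jall (R : comPzRingType) (x : R) (I : nat -> R -> Prop) (a : R) : Prop :=
  exists N, Jle x I N a.

Definition comax (R : comPzRingType) (A B : R -> Prop) :=
  exists a b, A a /\ B b /\ a + b = 1.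

Definition sub (R : comPzRingType) (A B : R -> Prop) := forall y, A y -> B y.

Lemma Jc_ideal (R : comPzRingType) (x : R) A : is_ideal (Jc x A).
Proof.
split.
- by move=> b _; exists 0; rewrite mul0r mulr0.
- move=> a1 a2 h1 h2 b Ab; have [c1 e1] := h1 b Ab; have [c2 e2] := h2 b Ab.
  by exists (c1 + c2); rewrite mulrDl e1 e2 mulrDr.
- move=> r a h b Ab; have [c e] := h b Ab.
  by exists (r * c); rewrite -mulrA e mulrCA.
Qed.

Lemma Jle_ideal (R : comPzRingType) (x : R) I N : is_ideal (Jle x I N).
Proof.
elim: N => [|N [h0 hD hM]] /=.
  split => //; first by move=> a b -> ->; rewrite addr0.
  by move=> r a ->; rewrite mulr0.
have [c0 cD cM] := Jc_ideal x (I N).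
split.
- by exists 0, 0; rewrite addr0.
- move=> a b [a1 [a2 [h1 [h2 ->]]]] [b1 [b2 [h3 [h4 ->]]]].
  exists (a1 + b1), (a2 + b2); split; first exact: hD.
  split; [exact: cD | ring].
- move=> r a [a1 [a2 [h1 [h2 ->]]]]; exists (r * a1), (r * a2).
  split; first exact: hM.
  split; [exact: cM | ring].
Qed.

Lemma Jle_mono (R : comPzRingType) (x : R) I n N a :
  (n <= N)%N -> Jle x I n a -> Jle x I N a.
Proof.
elim: N => [|N IH]; first by rewrite leqn0 => /eqP ->.
rewrite leq_eqVlt => /orP [/eqP -> //|]; rewrite ltnS => hn ha.
exists a, 0; split; first exact: IH.
split; last by rewrite addr0.
by case: (Jc_ideal x (I N)).
Qed.

Lemma Jall_ideal (R : comPzRingType) (x : R) I : is_ideal (Jall x I).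
Proof.
split.
- by exists 0%N.
- move=> a b [n ha] [n' hb]; exists (maxn n n').
  case: (Jle_ideal x I (maxn n n')) => [_ hD _]; apply: hD.
    by apply: Jle_mono ha; exact: leq_maxl.
  by apply: Jle_mono hb; exact: leq_maxr.
- move=> r a [n ha]; exists n; case: (Jle_ideal x I n) => [_ _ hM]; exact: hM.
Qed.

Lemma sum_gen (R : comPzRingType) (P : R -> Prop) (a d : R) (l : seq (R * R)) :
  is_ideal P -> (forall p, p \in l -> exists z, P z /\ a * (p.1 * p.2) = z * d) ->
  exists z, P z /\ a * \sum_(p <- l) p.1 * p.2 = z * d.
Proof.
move=> [p0 pD pM]; elim: l => [|q l IH] hl.
  by exists 0; split => //; rewrite big_nil mulr0 mul0r.
have [z1 [h1 e1]] := hl q (mem_head _ _).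
have [z2 [h2 e2]] : exists z, P z /\ a * \sum_(p <- l) p.1 * p.2 = z * d.
  by apply: IH => p pl; apply: hl; rewrite in_cons pl orbT.
exists (z1 + z2); split; first exact: pD.
by rewrite big_cons mulrDr e1 e2 mulrDl.
Qed.

Lemma Jle_loc (R : comPzRingType) (x : R) I (m : R -> Prop) p n :
  maximal_ideal m ->
  (forall j, (j < n)%N -> exists v, ~ m v /\ forall a, Jc x (I j) a -> exists r, v * a = p * r) ->
  exists v, ~ m v /\ forall a, Jle x I n a -> exists r, v * a = p * r.
Proof.
move=> hm; elim: n => [|n IH] hj.
  exists 1; split; first exact: max_not1.
  by move=> a /= ->; exists 0; rewrite !mulr0.
have [v [hv Hv]] : exists v, ~ m v /\ forall a, Jle x I n a -> exists r, v * a = p * r.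
  by apply: IH => j hj'; apply: hj; exact: ltnW.
have [w [hw Hw]] := hj n (ltnSn n).
exists (v * w); split; first exact: max_prime.
move=> a [a1 [a2 [h1 [h2 ->]]]].
have [r1 e1] := Hv a1 h1; have [r2 e2] := Hw a2 h2.
exists (w * r1 + v * r2).
have -> : v * w * (a1 + a2) = w * (v * a1) + v * (w * a2) by ring.
rewrite e1 e2; ring.
Qed.

Lemma comax_sym (R : comPzRingType) (A B : R -> Prop) : comax A B -> comax B A.
Proof. by move=> [a [b [ha [hb e]]]]; exists b, a; rewrite addrC. Qed.

Lemma comax_out (R : comPzRingType) (A B m : R -> Prop) :
  maximal_ideal m -> comax A B -> sub B m -> exists a, A a /\ ~ m a.
Proof.
move=> hm [a [b [ha [hb e]]]] hB; exists a; split => // ma.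
have [[_ mD _] m1 _] := hm; apply: m1; rewrite -e; apply: mD => //; exact: hB.
Qed.

Lemma Jc_of_inv (R : comPzRingType) (x d w e : R) (A : R -> Prop) :
  regular d -> (forall b, A b -> exists c, b * w = c * d) -> x * w = e * d -> Jc x A e.
Proof.
move=> hd hw ex b Ab; have [c ec] := hw b Ab; exists c.
apply: (reg_cancel hd).
have -> : e * b * d = b * (e * d) by ring.
rewrite -ex.
have -> : b * (x * w) = x * (b * w) by ring.
by rewrite ec; ring.
Qed.

Lemma dir2_core (R : comPzRingType) (x : R) (I : nat -> R -> Prop) :
  regular x ->
  (forall n, is_ideal (I n)) -> (forall n, I n x) -> (forall n, invertible (I n)) ->
  (forall n, exists M, maximal_ideal M /\ sub (I n) M) ->
  (forall j k, (j < k)%N -> comax (I j) (I k)) ->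
  (forall J : R -> Prop, is_ideal J -> regular_ideal J -> locally_principal J -> invertible J) ->
  False.
Proof.
move=> xr hI Ix hinv hM hcm H.
have cm : forall j k, j != k -> comax (I j) (I k).
  move=> j k; case: (ltngtP j k) => // h _; [exact: hcm | exact/comax_sym/hcm].
pose J := Jall x I.
have JI : is_ideal J := Jall_ideal x I.
have Jx : J x.
  exists 1%N, 0, x; split => //; split; last by rewrite add0r.
  by move=> b _; exists b.
have JLP : locally_principal J.
  move=> m hm; apply: loc_of_lp => //.
  have main : exists p, J p /\ forall j, exists v, ~ m v /\
      forall a, Jc x (I j) a -> exists r, v * a = p * r.
    case: (classic (exists k, sub (I k) m)) => [[k hk] | hno].
    - have [d [dr [l [hl e]]]] := inv_form (hinv k).
      case: (classic (exists p, p \in l /\ ~ exists z, m z /\ 1 * (p.1 * p.2) = z * d))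
        => [[p [pl hp]] | hno]; last first.
        exfalso.
        have [z [mz ez]] : exists z, m z /\ 1 * \sum_(p <- l) p.1 * p.2 = z * d.
          apply: sum_gen; first by case: hm.
          by move=> p pl; apply: NNPP => h; apply: hno; exists p.
        rewrite e mul1r -{1}(mul1r d) in ez.
        by apply: (max_not1 hm); rewrite (reg_cancel dr ez).
      have [Ip1 hp2] := hl p pl.
      have [c ec] := hp2 p.1 Ip1.
      have nmc : ~ m c by move=> mc; apply: hp; exists c; rewrite mul1r.
      have [e0 ee0] := hp2 x (Ix k).
      have Je0 : Jc x (I k) e0 := Jc_of_inv dr hp2 ee0.
      have xc : x * c = p.1 * e0.
        apply: (reg_cancel dr); rewrite -mulrA -ec -mulrA -ee0; ring.
      exists e0; split.
        exists k.+1; apply: (Jle_mono (n := k.+1)) => //.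
        by exists 0, e0; split; [by case: (Jle_ideal x I k) | split => //; rewrite add0r].
      move=> j; case: (eqVneq j k) => [->|hjk].
        exists c; split => // a ha; have [g eg] := ha p.1 Ip1.
        exists g; apply: (reg_cancel dr).
        have -> : c * a * d = a * (c * d) by ring.
        rewrite -ec mulrA eg.
        have -> : x * g * p.2 = g * (x * p.2) by ring.
        by rewrite ee0; ring.
      have [al [Ial nmal]] := comax_out hm (cm j k hjk) hk.
      exists (c * al); split; first exact: max_prime.
      move=> a ha; have [g eg] := ha al Ial.
      exists (g * p.1).
      have -> : c * al * a = c * (a * al) by ring.
      rewrite eg.
      have -> : c * (x * g) = g * (x * c) by ring.
      by rewrite xc; ring.
    - exists x; split; first by [].
      move=> j; have [b [Ib nmb]] : exists b, I j b /\ ~ m b.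
        apply: NNPP => h; apply: hno; exists j => b Ib.
        by apply: NNPP => nb; apply: h; exists b.
      exists b; split => // a ha; have [c ec] := ha b Ib.
      by exists c; rewrite mulrC.
  have [p [Jp hp]] := main.
  exists p; split => // a [N ha].
  have [v [hv Hv]] := @Jle_loc R x I m p N hm (fun j _ => hp j).
  have [r er] := Hv a ha; by exists v, r.
have [d [dr [l [hl e]]]] := inv_form (H J JI (ex_intro _ x (conj Jx xr)) JLP).
have [N hN] : exists N, forall p, p \in l -> Jle x I N p.1.
  elim: (l) (fun p pl => (hl p pl).1) => [|q l' IH] hq; first by exists 0%N.
  have [N1 h1] := hq q (mem_head _ _).
  have [N2 h2] : exists N, forall p, p \in l' -> Jle x I N p.1.
    by apply: IH => p pl; apply: hq; rewrite in_cons pl orbT.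
  exists (maxn N1 N2) => p; rewrite in_cons => /orP [/eqP -> | pl].
    by apply: Jle_mono h1; exact: leq_maxl.
  by apply: Jle_mono (h2 p pl); exact: leq_maxr.
have JN : forall a, J a -> Jle x I N a.
  move=> a Ja.
  have [z [hz ez]] : exists z, Jle x I N z /\ a * \sum_(p <- l) p.1 * p.2 = z * d.
    apply: sum_gen; first exact: Jle_ideal.
    move=> p pl; have [c ec] := (hl p pl).2 a Ja.
    exists (c * p.1); split; first by case: (Jle_ideal x I N) => [_ _ hM2]; apply: hM2; exact: hN.
    by rewrite mulrCA ec; ring.
  by rewrite e in ez; rewrite (reg_cancel dr ez).
have [d' [dr' [l' [hl' e']]]] := inv_form (hinv N).
have [M [hMm hIM]] := hM N.
have [s [ns Hs]] : exists s, ~ M s /\ forall a, Jle x I N a -> exists r, s * a = x * r.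
  apply: Jle_loc => // j hj.
  have [al [Ial nmal]] := comax_out hMm (hcm j N hj) hIM.
  exists al; split => // a ha; have [c ec] := ha al Ial.
  by exists c; rewrite mulrC.
have [z [Iz ez]] : exists z, I N z /\ s * \sum_(p <- l') p.1 * p.2 = z * d'.
  apply: sum_gen; first exact: hI.
  move=> p pl; have [Ip hp] := hl' p pl.
  have [e0 ee0] := hp x (Ix N).
  have Je0 : J e0.
    exists N.+1, 0, e0; split; first by case: (Jle_ideal x I N).
    by split; [exact: (Jc_of_inv dr' hp ee0) | rewrite add0r].
  have [f ef] := Hs e0 (JN e0 Je0).
  exists (p.1 * f); split; first by case: (hI N) => [_ _ hM']; rewrite mulrC; apply: hM'.
  apply: (reg_cancel xr).
  have -> : s * (p.1 * p.2) * x = s * p.1 * (x * p.2) by ring.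
  rewrite ee0.
  have -> : s * p.1 * (e0 * d') = p.1 * d' * (s * e0) by ring.
  by rewrite ef; ring.
rewrite e' in ez; have sz := reg_cancel dr' ez.
by apply: ns; apply: hIM; rewrite sz.
Qed.

Definition Rem (R : comPzRingType) (x : R) (S : seq (seq R)) (m : R -> Prop) :=
  maximal_ideal m /\ m x /\ forall s, s \in S -> ~ sub (span s) m.

Definition infinite (R : comPzRingType) (P : (R -> Prop) -> Prop) :=
  forall n (f : nat -> R -> Prop), exists m, P m /\
    forall i, (i < n)%N -> ~ (forall y, m y <-> f i y).

Definition Pstep (R : comPzRingType) (x : R) (S : seq (seq R)) (s : seq R) :=
  span s x /\ (exists M, maximal_ideal M /\ sub (span s) M) /\
  forall s', s' \in S -> comax (span s') (span s).

Lemma cmx_list (R : comPzRingType) (M : R -> Prop) (S : seq (seq R)) :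
  maximal_ideal M -> (forall s, s \in S -> ~ sub (span s) M) ->
  exists t : seq R, (forall a, a \in t -> M a) /\
    forall s, s \in S -> exists a b, a \in t /\ span s b /\ a + b = 1.
Proof.
move=> hM; elim: S => [|s S IH] hS; first by exists [::].
have [t [ht Ht]] : exists t : seq R, (forall a, a \in t -> M a) /\
    forall s, s \in S -> exists a b, a \in t /\ span s b /\ a + b = 1.
  by apply: IH => s' h; apply: hS; rewrite in_cons h orbT.
have [b [sb nMb]] : exists b, span s b /\ ~ M b.
  apply: NNPP => h; apply: (hS s (mem_head _ _)) => b sb.
  by apply: NNPP => nb; apply: h; exists b.
have [c [n [Mn e]]] := max_unit hM nMb.
exists (n :: t); split.
  by move=> a; rewrite in_cons => /orP [/eqP -> //|]; exact: ht.
move=> s'; rewrite in_cons => /orP [/eqP -> | h].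
  exists n, (c * b); split; first exact: mem_head.
  split => //; by case: (span_ideal s) => [_ _ hm]; apply: hm.
have [a [b' [ha [hb' e']]]] := Ht s' h.
by exists a, b'; rewrite in_cons ha orbT.
Qed.

Lemma not_inf (R : comPzRingType) (P : (R -> Prop) -> Prop) :
  ~ infinite P -> exists n (f : nat -> R -> Prop), forall m, P m ->
    exists i, (i < n)%N /\ forall y, m y <-> f i y.
Proof.
move=> h; apply: NNPP => h1; apply: h => n f; apply: NNPP => h2; apply: h1.
exists n, f => m Pm; apply: NNPP => h3; apply: h2; exists m; split => // i hi e.
by apply: h3; exists i.
Qed.

Lemma rem_rcons (R : comPzRingType) (x : R) S s m :
  Rem x S m -> ~ sub (span s) m -> Rem x (rcons S s) m.
Proof.
move=> [h1 [h2 h3]] h4; split => //; split => // s'.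
by rewrite mem_rcons in_cons => /orP [/eqP -> //|]; exact: h3.
Qed.

Lemma step (R : comPzRingType) (x : R) (S : seq (seq R)) :
  infinite (Rem x S) -> exists s, Pstep x S s /\ infinite (Rem x (rcons S s)).
Proof.
move=> hinf.
have [M [[hM [Mx MS]] _]] := hinf 0%N (fun _ _ => False).
have [N [[hN [Nx NS]] hNM]] := hinf 1%N (fun _ => M).
have [e [Me nNe]] : exists e, M e /\ ~ N e.
  apply: NNPP => h.
  have sMN : forall e, M e -> N e by move=> e Me; apply: NNPP => nN; apply: h; exists e.
  have [hNI N1 _] := hN.
  have [_ _ Mmax] := hM.
  case: (Mmax N hNI sMN) => // hh; apply: (hNM 0%N) => // y; split => /hh //.
have [c [n [Nn en]]] := max_unit hN nNe.
have [[m0 mD mM] M1 _] := hM.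
have [[n0 nD nM] N1 _] := hN.
have [tM [htM HtM]] := cmx_list hM MS.
have [tN [htN HtN]] := cmx_list hN NS.
pose sM := x :: c * e :: tM.
pose sN := x :: n :: tN.
have PM : Pstep x S sM.
  split; first by apply: span_mem; exact: mem_head.
  split.
    exists M; split => //; apply: span_sub => //.
    move=> a; rewrite !in_cons => /orP [/eqP -> //|/orP [/eqP -> |]]; last exact: htM.
    exact: mM.
  move=> s' hs'; have [a [b [ha [hb e']]]] := HtM s' hs'.
  exists b, a; split => //; split; last by rewrite addrC.
  by apply: span_mem; rewrite !in_cons ha !orbT.
have PN : Pstep x S sN.
  split; first by apply: span_mem; exact: mem_head.
  split.
    exists N; split => //; apply: span_sub => //.
    by move=> a; rewrite !in_cons => /orP [/eqP -> //|/orP [/eqP -> |]]; last exact: htN.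
  move=> s' hs'; have [a [b [ha [hb e']]]] := HtN s' hs'.
  exists b, a; split => //; split; last by rewrite addrC.
  by apply: span_mem; rewrite !in_cons ha !orbT.
case: (classic (infinite (Rem x (rcons S sM)))) => [h|hM']; first by exists sM.
case: (classic (infinite (Rem x (rcons S sN)))) => [h|hN']; first by exists sN.
have [n1 [f1 hf1]] := not_inf hM'.
have [n2 [f2 hf2]] := not_inf hN'.
pose h i := if (i < n1)%N then f1 i else f2 (i - n1)%N.
have [m [hm hmh]] := hinf (n1 + n2)%N h.
exfalso.
have [[m0' mD' _] m1' _] := hm.1; have hM1 := m1'.
case: (classic (sub (span sM) m)) => hsM.
  case: (classic (sub (span sN) m)) => hsN.
    apply: hM1; rewrite -en; apply: mD'.
      by apply: hsN; apply: span_mem; rewrite !in_cons eqxx orbT.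
    by apply: hsM; apply: span_mem; rewrite !in_cons eqxx orbT.
  have [i [hi ei]] := hf2 m (rem_rcons hm hsN).
  apply: (hmh (n1 + i)%N); first by rewrite ltn_add2l.
  by rewrite /h ltnNge leq_addr /= addKn.
have [i [hi ei]] := hf1 m (rem_rcons hm hsM).
apply: (hmh i); first by apply: leq_trans hi (leq_addr _ _).
by rewrite /h hi.
Qed.

Fixpoint stseq (R : comPzRingType) (g : seq (seq R) -> seq R) (n : nat) : seq (seq R) :=
  if n is n'.+1 then rcons (stseq g n') (g (stseq g n')) else [::].

Lemma st_mem (R : comPzRingType) (g : seq (seq R) -> seq R) j k :
  (j < k)%N -> g (stseq g j) \in stseq g k.
Proof.
elim: k => [//|k IH]; rewrite ltnS leq_eqVlt => /orP [/eqP -> | h] /=.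
  by rewrite mem_rcons mem_head.
by rewrite mem_rcons in_cons IH ?orbT.
Qed.

Lemma dir2 (R : comPzRingType) : prufer R ->
  (forall I : R -> Prop, is_ideal I -> regular_ideal I ->
      locally_principal I -> invertible I) -> finite_character R.
Proof.
move=> hP H x xr; apply: NNPP => hnf.
have inf0 : infinite (Rem x [::]).
  move=> n f; apply: NNPP => h; apply: hnf; exists n, f => m hm mx.
  apply: NNPP => h2; apply: h; exists m; split; first by split => //.
  by move=> i hi e; apply: h2; exists i.
have gex : forall S, exists s, infinite (Rem x S) ->
    Pstep x S s /\ infinite (Rem x (rcons S s)).
  move=> S; case: (classic (infinite (Rem x S))) => h.
    by have [s hs] := step h; exists s.
  by exists [::].
pose g S := projT1 (cid (gex S)).
have hg : forall S, infinite (Rem x S) -> Pstep x S (g S) /\ infinite (Rem x (rcons S (g S))).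
  by move=> S; exact: (projT2 (cid (gex S))).
have infn : forall n, infinite (Rem x (stseq g n)).
  by elim=> [//|n IH] /=; exact: (hg _ IH).2.
have Pn : forall n, Pstep x (stseq g n) (g (stseq g n)) by move=> n; exact: (hg _ (infn n)).1.
apply: (@dir2_core R x (fun n => span (g (stseq g n)))) => //.
- by move=> n; exact: span_ideal.
- by move=> n; exact: (Pn n).1.
- move=> n; apply: hP; [exact: span_ideal | exact: span_fg |].
  by exists x; split => //; exact: (Pn n).1.
- by move=> n; exact: (Pn n).2.1.
- by move=> j k hjk; apply: (Pn k).2.2; exact: st_mem.
Qed.

Unset Implicit Arguments.

Theorem corollary4p6 (R : comPzRingType) :
  prufer R ->
  ((forall I : R -> Prop, is_ideal I -> regular_ideal I ->
      locally_principal I -> invertible I)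
   <-> finite_character R).
Proof.
move=> hP; split; [exact: dir2 | exact: dir1].
Qed.
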